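(* Let $n$ be a natural number, $X=[\underline{x},\overline{x}]$ an interval with rational endpoints and $x \in X$. Then $\arctan(x) \in [\arctan(X)]_n$ and $\exp(x) \in [\exp(X)]_n$; if moreover $\underline{x} \ge 0$ then $\sqrt{x} \in [\sqrt{X}]_n$; and if $\underline{x} > 0$ then $\ln(x) \in [\ln(X)]_n$. Moreover, $\pi \in [\pi]_n$.
   Context: An interval $[a,b]$ with rational endpoints is the set $\{z : a\le z\le b\}$. Bounding functions (all $n\in\mathbb{N}$): Square root ($x\ge0$): $\mathrm{UB}_{\mathrm{sqrt}}(x,0)=x+1$, $\mathrm{UB}_{\mathrm{sqrt}}(x,n+1)=\frac12(y+x/y)$ with $y=\mathrm{UB}_{\mathrm{sqrt}}(x,n)$, $\mathrm{LB}_{\mathrm{sqrt}}(x,n)=x/\mathrm{UB}_{\mathrm{sqrt}}(x,n)$. Arctangent: for $0<x\le1$, $\mathrm{LB}_{\mathrm{atan}}(x,n)=\sum_{i=0}^{2n+1}(-1)^i\frac{x^{2i+1}}{2i+1}$, $\mathrm{UB}_{\mathrm{atan}}(x,n)=\sum_{i=0}^{2n}(-1)^i\frac{x^{2i+1}}{2i+1}$; $\mathrm{LB}_{\pi}(n)=16\,\mathrm{LB}_{\mathrm{atan}}(1/5,n)-4\,\mathrm{UB}_{\mathrm{atan}}(1/239,n)$, $\mathrm{UB}_{\pi}(n)=16\,\mathrm{UB}_{\mathrm{atan}}(1/5,n)-4\,\mathrm{LB}_{\mathrm{atan}}(1/239,n)$; both atan bounds are $0$ at $x=0$; for $x>1$,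 $\mathrm{LB}_{\mathrm{atan}}(x,n)=\mathrm{LB}_\pi(n)/2-\mathrm{UB}_{\mathrm{atan}}(1/x,n)$, $\mathrm{UB}_{\mathrm{atan}}(x,n)=\mathrm{UB}_\pi(n)/2-\mathrm{LB}_{\mathrm{atan}}(1/x,n)$; for $x<0$, $\mathrm{LB}_{\mathrm{atan}}(x,n)=-\mathrm{UB}_{\mathrm{atan}}(-x,n)$, $\mathrm{UB}_{\mathrm{atan}}(x,n)=-\mathrm{LB}_{\mathrm{atan}}(-x,n)$. Exponential: for $-1\le x<0$, $\mathrm{LB}_{\exp}(x,n)=\sum_{i=0}^{2n+3}x^i/i!$, $\mathrm{UB}_{\exp}(x,n)=\sum_{i=0}^{2n+2}x^i/i!$; both equal $1$ at $x=0$; for $x<-1$ with $k=-\lfloor x\rfloor$, $\mathrm{LB}_{\exp}(x,n)=\mathrm{LB}_{\exp}(x/k,n)^k$, $\mathrm{UB}_{\exp}(x,n)=\mathrm{UB}_{\exp}(x/k,n)^k$; for $x>0$, $\mathrm{LB}_{\exp}(x,n)=1/\mathrm{UB}_{\exp}(-x,n)$, $\mathrm{UB}_{\exp}(x,n)=1/\mathrm{LB}_{\exp}(-x,n)$. Logarithm: for $1<x\le2$, $\mathrm{LB}_{\ln}(x,n)=\sum_{i=1}^{2n}(-1)^{i+1}\frac{(x-1)^i}{i}$, $\mathrm{UB}_{\ln}(x,n)=\sum_{i=1}^{2n+1}(-1)^{i+1}\frac{(x-1)^i}{i}$; both are $0$ at $x=1$; for $0<x<1$, $\mathrm{LB}_{\ln}(x,n)=-\mathrm{UB}_{\ln}(1/x,n)$,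 $\mathrm{UB}_{\ln}(x,n)=-\mathrm{LB}_{\ln}(1/x,n)$; for $x>2$, writing $x=2^m y$ with $m\in\mathbb{N}$, $1\le y<2$, $\mathrm{LB}_{\ln}(x,n)=m\,\mathrm{LB}_{\ln}(2,n)+\mathrm{LB}_{\ln}(y,n)$, $\mathrm{UB}_{\ln}(x,n)=m\,\mathrm{UB}_{\ln}(2,n)+\mathrm{UB}_{\ln}(y,n)$. Interval functions: $[\sqrt{X}]_n=[\mathrm{LB}_{\mathrm{sqrt}}(\underline{x},n),\mathrm{UB}_{\mathrm{sqrt}}(\overline{x},n)]$ (when $\underline{x}\ge0$); $[\arctan(X)]_n=[\mathrm{LB}_{\mathrm{atan}}(\underline{x},n),\mathrm{UB}_{\mathrm{atan}}(\overline{x},n)]$; $[\pi]_n=[\mathrm{LB}_\pi(n),\mathrm{UB}_\pi(n)]$; $[\exp(X)]_n=[\mathrm{LB}_{\exp}(\underline{x},n),\mathrm{UB}_{\exp}(\overline{x},n)]$; $[\ln(X)]_n=[\mathrm{LB}_{\ln}(\underline{x},n),\mathrm{UB}_{\ln}(\overline{x},n)]$ (when $\underline{x}>0$). *)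

(* Defs.v *)
From Stdlib Require Import QArith Qround Reals Qreals ZArith Arith.
Open Scope Q_scope.

Fixpoint qpow (x : Q) (k : nat) : Q :=
  match k with O => 1 | S k' => x * qpow x k' end.

Definition qfact (i : nat) : Q := inject_Z (Z.of_nat (fact i)).

Fixpoint qsum (f : nat -> Q) (N : nat) : Q :=
  match N with O => 0 | S N' => qsum f N' + f N' end.

Definition qsign (i : nat) : Q := if Nat.even i then 1 else -1.
Definition qnat (i : nat) : Q := inject_Z (Z.of_nat i).

Fixpoint UB_sqrt (x : Q) (n : nat) : Q :=
  match n with
  | O => x + 1
  | S n' => let y := UB_sqrt x n' in (1#2) * (y + x / y)
  end.
Definition LB_sqrt (x : Q) (n : nat) : Q := x / UB_sqrt x n.

Definition atan_series (x : Q) (N : nat) : Q :=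
  qsum (fun i => qsign i * qpow x (2*i+1) / qnat (2*i+1)) N.
(* case 0 < x <= 1 *)
Definition LB_atan01 (x : Q) (n : nat) : Q := atan_series x (2*n+2).
Definition UB_atan01 (x : Q) (n : nat) : Q := atan_series x (2*n+1).

Definition LB_pi (n : nat) : Q := 16 * LB_atan01 (1#5) n - 4 * UB_atan01 (1#239) n.
Definition UB_pi (n : nat) : Q := 16 * UB_atan01 (1#5) n - 4 * LB_atan01 (1#239) n.

Definition LB_atan_nn (x : Q) (n : nat) : Q :=
  if Qeq_bool x 0 then 0
  else if Qle_bool x 1 then LB_atan01 x n
  else LB_pi n / 2 - UB_atan01 (/ x) n.
Definition UB_atan_nn (x : Q) (n : nat) : Q :=
  if Qeq_bool x 0 then 0
  else if Qle_bool x 1 then UB_atan01 x n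
  else UB_pi n / 2 - LB_atan01 (/ x) n.

Definition LB_atan (x : Q) (n : nat) : Q :=
  if Qle_bool 0 x then LB_atan_nn x n else - UB_atan_nn (- x) n.
Definition UB_atan (x : Q) (n : nat) : Q :=
  if Qle_bool 0 x then UB_atan_nn x n else - LB_atan_nn (- x) n.

Definition exp_series (x : Q) (N : nat) : Q :=
  qsum (fun i => qpow x i / qfact i) N.
(* case -1 <= x < 0 *)
Definition LB_exp1 (x : Q) (n : nat) : Q := exp_series x (2*n+4).
Definition UB_exp1 (x : Q) (n : nat) : Q := exp_series x (2*n+3).

Definition LB_exp_np (x : Q) (n : nat) : Q :=
  if Qeq_bool x 0 then 1
  else if Qle_bool (-1) x then LB_exp1 x n
  else let k := Z.to_nat (- Qfloor x) in qpow (LB_exp1 (x / qnat k) n) k.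
Definition UB_exp_np (x : Q) (n : nat) : Q :=
  if Qeq_bool x 0 then 1
  else if Qle_bool (-1) x then UB_exp1 x n
  else let k := Z.to_nat (- Qfloor x) in qpow (UB_exp1 (x / qnat k) n) k.

Definition LB_exp (x : Q) (n : nat) : Q :=
  if Qle_bool x 0 then LB_exp_np x n else / UB_exp_np (- x) n.
Definition UB_exp (x : Q) (n : nat) : Q :=
  if Qle_bool x 0 then UB_exp_np x n else / LB_exp_np (- x) n.

Definition ln_series (x : Q) (N : nat) : Q :=
  qsum (fun j => qsign j * qpow (x - 1) (S j) / qnat (S j)) N.
(* case 1 <= x <= 2 (the series is 0 at x = 1) *)
Definition LB_ln12 (x : Q) (n : nat) : Q := ln_series x (2*n).
Definition UB_ln12 (x : Q) (n : nat) : Q := ln_series x (2*n+1).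

(* for x >= 1: m = floor(log2 x) = log2 (floor x), y = x / 2^m in [1,2) *)
Definition ln_exp2 (x : Q) : nat := Z.to_nat (Z.log2 (Qfloor x)).
Definition ln_mant (x : Q) : Q := x / qpow 2 (ln_exp2 x).

Definition LB_ln_ge1 (x : Q) (n : nat) : Q :=
  if Qle_bool x 2 then LB_ln12 x n
  else qnat (ln_exp2 x) * LB_ln12 2 n + LB_ln12 (ln_mant x) n.
Definition UB_ln_ge1 (x : Q) (n : nat) : Q :=
  if Qle_bool x 2 then UB_ln12 x n
  else qnat (ln_exp2 x) * UB_ln12 2 n + UB_ln12 (ln_mant x) n.

Definition LB_ln (x : Q) (n : nat) : Q :=
  if Qle_bool 1 x then LB_ln_ge1 x n else - UB_ln_ge1 (/ x) n.
Definition UB_ln (x : Q) (n : nat) : Q :=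
  if Qle_bool 1 x then UB_ln_ge1 x n else - LB_ln_ge1 (/ x) n.

Definition interval := (Q * Q)%type.
Definition in_interval (z : R) (I : interval) : Prop :=
  (Q2R (fst I) <= z <= Q2R (snd I))%R.

Definition I_sqrt (X : interval) (n : nat) : interval := (LB_sqrt (fst X) n, UB_sqrt (snd X) n).
Definition I_atan (X : interval) (n : nat) : interval := (LB_atan (fst X) n, UB_atan (snd X) n).
Definition I_pi (n : nat) : interval := (LB_pi n, UB_pi n).
Definition I_exp (X : interval) (n : nat) : interval := (LB_exp (fst X) n, UB_exp (snd X) n).
Definition I_ln (X : interval) (n : nat) : interval := (LB_ln (fst X) n, UB_ln (snd X) n).

(* Main.v *)
Require Import Defs.
From Stdlib Require Import QArith Reals Qreals Qround Lra Lia Psatz ZArith.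

Open Scope R_scope.

Lemma mono_up (f f' : R -> R) a b : a <= b ->
  (forall c, a <= c <= b -> derivable_pt_lim f c (f' c)) ->
  (forall c, a <= c <= b -> 0 <= f' c) -> f a <= f b.
Proof.
  intros Hab Hd Hp. destruct (Req_dec a b) as [->|Hne]; [lra|].
  destruct (MVT_cor2 f f' a b ltac:(lra) Hd) as [c [Hc1 Hc2]].
  assert (0 <= f' c) by (apply Hp; lra).
  assert (0 <= f' c * (b - a)) by (apply Rmult_le_pos; lra). lra.
Qed.

Lemma mono_down (f f' : R -> R) a b : a <= b ->
  (forall c, a <= c <= b -> derivable_pt_lim f c (f' c)) ->
  (forall c, a <= c <= b -> f' c <= 0) -> f b <= f a.
Proof.
  intros Hab Hd Hp.
  assert (H := mono_up (fun x => - f x) (fun x => - f' x) a b Hab).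
  simpl in H. cut (- f a <= - f b). lra. apply H.
  - intros c Hc. apply (derivable_pt_lim_opp f c (f' c)). auto.
  - intros c Hc. specialize (Hp c Hc). lra.
Qed.

Lemma dpl_plus f g x a b : derivable_pt_lim f x a -> derivable_pt_lim g x b ->
  derivable_pt_lim (fun y => f y + g y) x (a+b).
Proof. intros. exact (derivable_pt_lim_plus f g x a b H H0). Qed.
Lemma dpl_minus f g x a b : derivable_pt_lim f x a -> derivable_pt_lim g x b ->
  derivable_pt_lim (fun y => f y - g y) x (a-b).
Proof. intros. exact (derivable_pt_lim_minus f g x a b H H0). Qed.
Lemma dpl_mult f g x a b : derivable_pt_lim f x a -> derivable_pt_lim g x b ->
  derivable_pt_lim (fun y => f y * g y) x (a * g x + f x * b).
Proof. intros. exact (derivable_pt_lim_mult f g x a b H H0). Qed.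
Lemma dpl_eq f x a b : derivable_pt_lim f x a -> a = b -> derivable_pt_lim f x b.
Proof. intros; subst; auto. Qed.
Lemma dterm c m y : derivable_pt_lim (fun z => c * z^m) y (c * (INR m * y^(pred m))).
Proof. exact (derivable_pt_lim_scal _ c y _ (derivable_pt_lim_pow y m)). Qed.
Lemma dconst c y : derivable_pt_lim (fun _ => c) y 0.
Proof. exact (derivable_pt_lim_const c y). Qed.

Lemma Q2R_nz q : Q2R q <> 0 -> ~ (q == 0)%Q.
Proof. intros H E. apply H. rewrite (Qeq_eqR _ _ E). unfold Q2R; simpl; lra. Qed.
Lemma Q2R_0 : Q2R 0 = 0. Proof. unfold Q2R; simpl; lra. Qed.
Lemma Q2R_1 : Q2R 1 = 1. Proof. unfold Q2R; simpl; lra. Qed.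
Lemma Q2R_injZ z : Q2R (inject_Z z) = IZR z.
Proof. unfold Q2R; simpl; lra. Qed.
Lemma Q2R_qnat i : Q2R (qnat i) = INR i.
Proof. unfold qnat. rewrite Q2R_injZ, INR_IZR_INZ. reflexivity. Qed.
Lemma Q2R_qfact i : Q2R (qfact i) = INR (fact i).
Proof. unfold qfact. rewrite Q2R_injZ, INR_IZR_INZ. reflexivity. Qed.
Lemma Q2R_qpow x k : Q2R (qpow x k) = Q2R x ^ k.
Proof. induction k; simpl. apply Q2R_1. rewrite Q2R_mult, IHk. reflexivity. Qed.
Lemma Q2R_qsign i : Q2R (qsign i) = (-1)^i.
Proof.
  assert (forall i, Q2R (qsign i) = (-1)^i /\ Q2R (qsign (S i)) = (-1)^(S i)).
  { induction i0. unfold qsign; simpl; split; unfold Q2R; simpl; lra.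
    destruct IHi0 as [A B]. split; auto.
    replace (qsign (S (S i0))) with (qsign i0) by reflexivity. rewrite A. simpl. ring. }
  apply H.
Qed.

Fixpoint rA (y : R) (N : nat) : R :=
  match N with O => 0 | S N' => rA y N' + ((-1)^N' / INR (2*N'+1)) * y^(2*N'+1) end.
Fixpoint rAd (y : R) (N : nat) : R :=
  match N with O => 0 | S N' => rAd y N' + ((-1)^N' / INR (2*N'+1)) * (INR (2*N'+1) * y^(pred (2*N'+1))) end.

Lemma qsum_S f N : qsum f (S N) = (qsum f N + f N)%Q.
Proof. reflexivity. Qed.

Lemma Q2R_atan_series x N : Q2R (atan_series x N) = rA (Q2R x) N.
Proof.
  unfold atan_series. induction N. apply Q2R_0.
  rewrite qsum_S, Q2R_plus, IHN. cbn [rA]. f_equal.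
  assert (HN : INR (2*N+1) <> 0) by (apply not_0_INR; lia).
  rewrite Q2R_div, Q2R_mult, Q2R_qsign, Q2R_qpow, Q2R_qnat.
  field; auto. apply Q2R_nz. rewrite Q2R_qnat. auto.
Qed.

Lemma rA_deriv y N : derivable_pt_lim (fun z => rA z N) y (rAd y N).
Proof.
  induction N; simpl. apply dconst.
  apply dpl_plus. auto. apply dterm.
Qed.

Lemma rAd_closed y N : / (1 + y^2) - rAd y N = (-1)^N * (y^2)^N / (1+y^2).
Proof.
  assert (P : 0 < 1 + y^2) by nra.
  induction N; cbn [rAd]. simpl; field; lra.
  replace (pred (2*N+1)) with (2*N)%nat by lia. rewrite pow_mult.
  assert (HN : INR (2*N+1) <> 0) by (apply not_0_INR; lia).
  replace (/ (1 + y ^ 2) - (rAd y N + (-1) ^ N / INR (2 * N + 1) * (INR (2 * N + 1) * (y ^ 2) ^ N)))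
   with ((/ (1 + y ^ 2) - rAd y N) - (-1) ^ N * (y ^ 2) ^ N) by (field; repeat split; try lra; auto).
  rewrite IHN. simpl. field. lra.
Qed.

Lemma rA_0 N : rA 0 N = 0.
Proof. induction N; cbn [rA]. auto. rewrite IHN, pow_i by lia. ring. Qed.

Lemma atan_lo n y : 0 <= y -> rA y (2*n+2) <= atan y.
Proof.
  intros Hy.
  assert (H := mono_up (fun z => atan z - rA z (2*n+2)) (fun z => / (1+z^2) - rAd z (2*n+2)) 0 y Hy).
  cbv beta in H. rewrite rA_0, atan_0 in H. cut (0 - 0 <= atan y - rA y (2 * n + 2)). lra.
  apply H.
  - intros c _. apply dpl_minus. apply derivable_pt_lim_atan. apply rA_deriv.
  - intros c _. rewrite rAd_closed. replace (2*n+2)%nat with (2*(n+1))%nat by lia.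
    rewrite pow_1_even. apply Rmult_le_pos. rewrite Rmult_1_l. apply pow_le. nra.
    apply Rlt_le, Rinv_0_lt_compat. nra.
Qed.

Lemma atan_hi n y : 0 <= y -> atan y <= rA y (2*n+1).
Proof.
  intros Hy.
  assert (H := mono_down (fun z => atan z - rA z (2*n+1)) (fun z => / (1+z^2) - rAd z (2*n+1)) 0 y Hy).
  cbv beta in H. rewrite rA_0, atan_0 in H. cut (atan y - rA y (2 * n + 1) <= 0 - 0). lra.
  apply H.
  - intros c _. apply dpl_minus. apply derivable_pt_lim_atan. apply rA_deriv.
  - intros c _. rewrite rAd_closed. replace (2*n+1)%nat with (S (2*n))%nat by lia.
    rewrite pow_1_odd.
    assert (0 <= (c^2)^S (2*n)) by (apply pow_le; nra).
    assert (0 < / (1 + c^2)) by (apply Rinv_0_lt_compat; nra).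
    unfold Rdiv. nra.
Qed.

Fixpoint rE (y : R) (N : nat) : R :=
  match N with O => 0 | S N' => rE y N' + (/ INR (fact N')) * y^N' end.

Lemma Q2R_exp_series x N : Q2R (exp_series x N) = rE (Q2R x) N.
Proof.
  unfold exp_series. induction N. apply Q2R_0.
  rewrite qsum_S, Q2R_plus, IHN. cbn [rE]. f_equal.
  assert (HN : INR (fact N) <> 0) by apply INR_fact_neq_0.
  rewrite Q2R_div, Q2R_qpow, Q2R_qfact.
  field; auto. apply Q2R_nz. rewrite Q2R_qfact. auto.
Qed.

Lemma rE_deriv y N : derivable_pt_lim (fun z => rE z (S N)) y (rE y N).
Proof.
  induction N.
  - cbn [rE]. eapply dpl_eq. apply dpl_plus. apply dconst. apply dterm. simpl. ring.
  - change (fun z => rE z (S (S N))) with (fun z => rE z (S N) + (/ INR (fact (S N))) * z^(S N)).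
    eapply dpl_eq. apply dpl_plus. apply IHN. apply dterm.
    cbn [rE pred]. f_equal.
    assert (HN : INR (fact N) <> 0) by apply INR_fact_neq_0.
    assert (HS : INR (S N) <> 0) by (apply not_0_INR; lia).
    replace (fact (S N)) with (S N * fact N)%nat by reflexivity. rewrite mult_INR.
    field. auto.
Qed.

Lemma rE_0 N : rE 0 (S N) = 1.
Proof. induction N. simpl. field. change (rE 0 (S (S N))) with (rE 0 (S N) + / INR (fact (S N)) * 0^(S N)).
  rewrite IHN. simpl. ring. Qed.

Lemma exp_sign N y : y <= 0 -> 0 <= (-1)^N * (exp y - rE y N).
Proof.
  revert y. induction N; intros y Hy.
  - simpl. pose proof (exp_pos y). lra.
  - assert (H := mono_down (fun z => (-1)^(S N) * (exp z - rE z (S N)))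
       (fun z => (-1)^(S N) * (exp z - rE z N)) y 0 Hy).
    cbv beta in H. rewrite rE_0, exp_0 in H.
    cut ((-1) ^ S N * (1 - 1) <= (-1) ^ S N * (exp y - rE y (S N))). lra.
    apply H.
    + intros c _. eapply dpl_eq. apply dpl_mult. apply dconst.
      apply dpl_minus. apply derivable_pt_lim_exp. apply rE_deriv. cbv beta. ring.
    + intros c Hc. specialize (IHN c ltac:(lra)). simpl. lra.
Qed.

Lemma exp_lo n y : y <= 0 -> rE y (2*n+4) <= exp y.
Proof.
  intros Hy. pose proof (exp_sign (2*n+4) y Hy).
  replace (2*n+4)%nat with (2*(n+2))%nat in H by lia. rewrite pow_1_even in H.
  replace (2*n+4)%nat with (2*(n+2))%nat by lia. lra.
Qed.

Lemma exp_hi n y : y <= 0 -> exp y <= rE y (2*n+3).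
Proof.
  intros Hy. pose proof (exp_sign (2*n+3) y Hy).
  replace (2*n+3)%nat with (S (2*(n+1)))%nat in H by lia. rewrite pow_1_odd in H.
  replace (2*n+3)%nat with (S (2*(n+1)))%nat by lia. lra.
Qed.

Lemma rE_pos n y : -1 <= y <= 0 -> 0 < rE y (2*n+4).
Proof.
  intros Hy. induction n.
  - simpl. nra.
  - replace (2 * S n + 4)%nat with (S (S (2*n+4))) by lia.
    change (rE y (S (S (2*n+4)))) with
      (rE y (2*n+4) + / INR (fact (2*n+4)) * y^(2*n+4) + / INR (fact (S (2*n+4))) * y^(S (2*n+4))).
    replace (fact (S (2*n+4))) with (S (2*n+4) * fact (2*n+4))%nat by reflexivity.
    rewrite mult_INR.
    assert (HF : 0 < INR (fact (2*n+4))) by (apply lt_0_INR, lt_O_fact).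
    assert (HS : 1 <= INR (S (2*n+4))) by (apply (le_INR 1); lia).
    assert (HP : 0 <= y^(2*n+4)) by (replace (2*n+4)%nat with (2*(n+2))%nat by lia; rewrite pow_mult; apply pow_le; nra).
    change (y ^ S (2*n+4)) with (y * y^(2*n+4)).
    assert (0 <= / INR (fact (2 * n + 4)) * y ^ (2 * n + 4) + / (INR (S (2 * n + 4)) * INR (fact (2 * n + 4))) * (y * y ^ (2 * n + 4))).
    { replace (/ INR (fact (2 * n + 4)) * y ^ (2 * n + 4) + / (INR (S (2 * n + 4)) * INR (fact (2 * n + 4))) * (y * y ^ (2 * n + 4)))
      with ((y ^ (2*n+4) / INR (fact (2*n+4))) * (1 + y / INR (S (2*n+4)))) by (field; lra).
      apply Rmult_le_pos. unfold Rdiv; apply Rmult_le_pos; [lra| apply Rlt_le, Rinv_0_lt_compat; lra].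
      assert (-1 <= y / INR (S (2*n+4))). { apply (Rmult_le_reg_r (INR (S (2*n+4)))). lra.
        unfold Rdiv. rewrite Rmult_assoc, Rinv_l by lra. lra. }
      lra. }
    lra.
Qed.

Lemma exp_nat k y : exp (INR k * y) = exp y ^ k.
Proof. induction k. simpl. rewrite Rmult_0_l. apply exp_0.
  rewrite S_INR, Rmult_plus_distr_r, Rmult_1_l, exp_plus, IHk. simpl. ring. Qed.

Fixpoint rL (t : R) (N : nat) : R :=
  match N with O => 0 | S N' => rL t N' + ((-1)^N' / INR (S N')) * t^(S N') end.
Fixpoint rLd (t : R) (N : nat) : R :=
  match N with O => 0 | S N' => rLd t N' + ((-1)^N' / INR (S N')) * (INR (S N') * t^(pred (S N'))) end.

Lemma Q2R_ln_series x N : Q2R (ln_series x N) = rL (Q2R x - 1) N.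
Proof.
  unfold ln_series. induction N. apply Q2R_0.
  rewrite qsum_S, Q2R_plus, IHN. cbn [rL]. f_equal.
  assert (HN : INR (S N) <> 0) by (apply not_0_INR; lia).
  rewrite Q2R_div, Q2R_mult, Q2R_qsign, Q2R_qpow, Q2R_qnat, Q2R_minus, Q2R_1.
  field; auto. apply Q2R_nz. rewrite Q2R_qnat. auto.
Qed.

Lemma rL_deriv y N : derivable_pt_lim (fun z => rL z N) y (rLd y N).
Proof.
  induction N; cbn [rL rLd]. apply dconst.
  apply dpl_plus. auto. apply dterm.
Qed.

Lemma rLd_closed t N : 0 <= t -> / (1 + t) - rLd t N = (-1)^N * t^N / (1+t).
Proof.
  intros Ht.
  induction N; cbn [rLd]. simpl; field; lra.
  cbn [pred].
  assert (HN : INR (S N) <> 0) by (apply not_0_INR; lia).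
  replace (/ (1 + t) - (rLd t N + (-1) ^ N / INR (S N) * (INR (S N) * t ^ N)))
   with ((/ (1 + t) - rLd t N) - (-1) ^ N * t ^ N) by (field; repeat split; try lra; auto).
  rewrite IHN. simpl. field. lra.
Qed.

Lemma rL_0 N : rL 0 N = 0.
Proof. induction N; cbn [rL]. auto. rewrite IHN, pow_i by lia. ring. Qed.

Lemma dln1 t : 0 <= t -> derivable_pt_lim (fun z => ln (1 + z)) t (/ (1 + t)).
Proof.
  intros Ht. eapply dpl_eq.
  exact (derivable_pt_lim_comp (fun z => 1 + z) ln t 1 (/ (1+t))
     (dpl_eq (fun z => 1 + z) t (0+1) 1 (dpl_plus _ _ _ _ _ (dconst 1 t) (derivable_pt_lim_id t)) ltac:(ring))
     (derivable_pt_lim_ln (1+t) ltac:(lra))).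
  ring.
Qed.

Lemma ln_lo n t : 0 <= t -> rL t (2*n) <= ln (1 + t).
Proof.
  intros Ht.
  assert (H := mono_up (fun z => ln (1 + z) - rL z (2*n)) (fun z => / (1+z) - rLd z (2*n)) 0 t Ht).
  cbv beta in H. rewrite rL_0, Rplus_0_r, ln_1 in H. cut (0 - 0 <= ln (1 + t) - rL t (2 * n)). lra.
  apply H.
  - intros c Hc. apply dpl_minus. apply dln1; lra. apply rL_deriv.
  - intros c Hc. rewrite rLd_closed by lra.
    rewrite pow_1_even. rewrite Rmult_1_l. unfold Rdiv. apply Rmult_le_pos.
    rewrite pow_mult. apply pow_le. nra.
    apply Rlt_le, Rinv_0_lt_compat. lra.
Qed.

Lemma ln_hi n t : 0 <= t -> ln (1 + t) <= rL t (2*n+1).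
Proof.
  intros Ht.
  assert (H := mono_down (fun z => ln (1 + z) - rL z (2*n+1)) (fun z => / (1+z) - rLd z (2*n+1)) 0 t Ht).
  cbv beta in H. rewrite rL_0, Rplus_0_r, ln_1 in H. cut (ln (1 + t) - rL t (2 * n + 1) <= 0 - 0). lra.
  apply H.
  - intros c Hc. apply dpl_minus. apply dln1; lra. apply rL_deriv.
  - intros c Hc. rewrite rLd_closed by lra. replace (2*n+1)%nat with (S (2*n))%nat by lia.
    rewrite pow_1_odd.
    assert (0 <= c^S (2*n)) by (apply pow_le; lra).
    assert (0 < / (1 + c)) by (apply Rinv_0_lt_compat; lra).
    unfold Rdiv. nra.
Qed.

Lemma UB_sqrt_ok x n : 0 <= Q2R x -> 0 < Q2R (UB_sqrt x n) /\ Q2R x <= Q2R (UB_sqrt x n) ^ 2.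
Proof.
  intros Hx. induction n; simpl UB_sqrt.
  - rewrite Q2R_plus, Q2R_1. split; nra.
  - destruct IHn as [P Q]. set (y := UB_sqrt x n) in *.
    rewrite Q2R_mult, Q2R_plus, Q2R_div by (apply Q2R_nz; lra).
    replace (Q2R (1#2)) with (/2) by (unfold Q2R; simpl; field).
    assert (0 <= Q2R x / Q2R y) by (unfold Rdiv; apply Rmult_le_pos; [lra| apply Rlt_le, Rinv_0_lt_compat; lra]).
    split. lra.
    replace ((/ 2 * (Q2R y + Q2R x / Q2R y)) ^ 2) with (Q2R x + (/2 * (Q2R y - Q2R x / Q2R y))^2) by (field; lra).
    pose proof (pow2_ge_0 (/ 2 * (Q2R y - Q2R x / Q2R y))). lra.
Qed.

Lemma sqrt_ub x n : 0 <= Q2R x -> sqrt (Q2R x) <= Q2R (UB_sqrt x n).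
Proof.
  intros Hx. destruct (UB_sqrt_ok x n Hx) as [P Q].
  rewrite <- (sqrt_pow2 (Q2R (UB_sqrt x n))) by lra. apply sqrt_le_1_alt. lra.
Qed.

Lemma sqrt_lb x n : 0 <= Q2R x -> Q2R (LB_sqrt x n) <= sqrt (Q2R x).
Proof.
  intros Hx. destruct (UB_sqrt_ok x n Hx) as [P Q]. pose proof (sqrt_ub x n Hx).
  unfold LB_sqrt. rewrite Q2R_div by (apply Q2R_nz; lra).
  pose proof (sqrt_sqrt _ Hx). pose proof (sqrt_pos (Q2R x)).
  apply (Rmult_le_reg_r (Q2R (UB_sqrt x n))). lra.
  unfold Rdiv. rewrite Rmult_assoc, Rinv_l by lra. nra.
Qed.

Lemma Qle_b_true x y : Qle_bool x y = true -> (x <= y)%Q.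
Proof. apply Qle_bool_iff. Qed.
Lemma Qle_b_false x y : Qle_bool x y = false -> Q2R y < Q2R x.
Proof. intros H. apply Qlt_Rlt. apply Qnot_le_lt. intros C. apply Qle_bool_iff in C. congruence. Qed.
Lemma Qeq_b_true x : Qeq_bool x 0 = true -> Q2R x = 0.
Proof. intros H. apply Qeq_bool_iff in H. rewrite (Qeq_eqR _ _ H). apply Q2R_0. Qed.
Lemma Q2R_m1 : Q2R (-1) = -1. Proof. unfold Q2R; simpl; field. Qed.
Lemma Q2R_2 : Q2R 2 = 2. Proof. unfold Q2R; simpl; field. Qed.
Lemma Q2R_div2 x : Q2R (x / 2) = Q2R x / 2.
Proof. rewrite Q2R_div, Q2R_2. auto. apply Q2R_nz. rewrite Q2R_2. lra. Qed.

Lemma LB01 q n : Q2R (LB_atan01 q n) = rA (Q2R q) (2*n+2).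
Proof. apply Q2R_atan_series. Qed.
Lemma UB01 q n : Q2R (UB_atan01 q n) = rA (Q2R q) (2*n+1).
Proof. apply Q2R_atan_series. Qed.

Lemma pi_bounds n : Q2R (LB_pi n) <= PI <= Q2R (UB_pi n).
Proof.
  unfold LB_pi, UB_pi. rewrite !Q2R_minus, !Q2R_mult, !LB01, !UB01.
  replace (Q2R 16) with 16 by (unfold Q2R; simpl; field).
  replace (Q2R 4) with 4 by (unfold Q2R; simpl; field).
  replace (Q2R (1#5)) with (/5) by (unfold Q2R; simpl; field).
  replace (Q2R (1#239)) with (/239) by (unfold Q2R; simpl; field).
  assert (HP : PI = 16 * atan (/5) - 4 * atan (/239)) by (pose proof Machin_4_5_239; lra).
  assert (0 <= /5) by lra. assert (0 <= /239) by lra.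
  pose proof (atan_lo n (/5) ltac:(lra)). pose proof (atan_hi n (/5) ltac:(lra)).
  pose proof (atan_lo n (/239) ltac:(lra)). pose proof (atan_hi n (/239) ltac:(lra)).
  lra.
Qed.

Lemma atan_nn q n : (0 <= q)%Q ->
  Q2R (LB_atan_nn q n) <= atan (Q2R q) <= Q2R (UB_atan_nn q n).
Proof.
  intros Hq. apply Qle_Rle in Hq. rewrite Q2R_0 in Hq.
  unfold LB_atan_nn, UB_atan_nn.
  destruct (Qeq_bool q 0) eqn:E0.
  { rewrite (Qeq_b_true _ E0), atan_0, Q2R_0. lra. }
  destruct (Qle_bool q 1) eqn:E1.
  { rewrite LB01, UB01. split. apply atan_lo; lra. apply atan_hi; lra. }
  apply Qle_b_false in E1. rewrite Q2R_1 in E1.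
  assert (Hinv : Q2R (/ q) = / Q2R q) by (apply Q2R_inv, Q2R_nz; lra).
  rewrite !Q2R_minus, !Q2R_div2, LB01, UB01, Hinv.
  assert (Ha : atan (Q2R q) = PI/2 - atan (/ Q2R q)) by (rewrite atan_inv by lra; ring).
  assert (0 <= / Q2R q) by (apply Rlt_le, Rinv_0_lt_compat; lra).
  pose proof (pi_bounds n). pose proof (atan_lo n (/ Q2R q) ltac:(lra)). pose proof (atan_hi n (/ Q2R q) ltac:(lra)).
  unfold I_pi in *. lra.
Qed.

Lemma atan_LB q n : Q2R (LB_atan q n) <= atan (Q2R q).
Proof.
  unfold LB_atan. destruct (Qle_bool 0 q) eqn:E.
  - apply atan_nn. apply Qle_b_true; auto.
  - apply Qle_b_false in E. rewrite Q2R_0 in E.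
    assert (Hq : (0 <= - q)%Q) by (apply Rle_Qle; rewrite Q2R_opp, Q2R_0; lra).
    pose proof (atan_nn (-q) n Hq). rewrite Q2R_opp in *. rewrite atan_opp in H. lra.
Qed.

Lemma atan_UB q n : atan (Q2R q) <= Q2R (UB_atan q n).
Proof.
  unfold UB_atan. destruct (Qle_bool 0 q) eqn:E.
  - apply atan_nn. apply Qle_b_true; auto.
  - apply Qle_b_false in E. rewrite Q2R_0 in E.
    assert (Hq : (0 <= - q)%Q) by (apply Rle_Qle; rewrite Q2R_opp, Q2R_0; lra).
    pose proof (atan_nn (-q) n Hq). rewrite Q2R_opp in *. rewrite atan_opp in H. lra.
Qed.

Lemma LBe q n : Q2R (LB_exp1 q n) = rE (Q2R q) (2*n+4).
Proof. apply Q2R_exp_series. Qed.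
Lemma UBe q n : Q2R (UB_exp1 q n) = rE (Q2R q) (2*n+3).
Proof. apply Q2R_exp_series. Qed.

Lemma exp_np q n : Q2R q <= 0 ->
  0 < Q2R (LB_exp_np q n) /\ Q2R (LB_exp_np q n) <= exp (Q2R q) /\ exp (Q2R q) <= Q2R (UB_exp_np q n).
Proof.
  intros Hq. unfold LB_exp_np, UB_exp_np.
  destruct (Qeq_bool q 0) eqn:E0.
  { rewrite (Qeq_b_true _ E0), exp_0, Q2R_1. lra. }
  destruct (Qle_bool (-1) q) eqn:E1.
  { apply Qle_b_true, Qle_Rle in E1. rewrite Q2R_m1 in E1.
    rewrite LBe, UBe. split. apply rE_pos; lra. split. apply exp_lo; lra. apply exp_hi; lra. }
  apply Qle_b_false in E1. rewrite Q2R_m1 in E1.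
  set (f := Qfloor q). set (k := Z.to_nat (- f)).
  assert (Hf : IZR f <= Q2R q) by (rewrite <- Q2R_injZ; apply Qle_Rle, Qfloor_le).
  assert (Hf1 : (f < -1)%Z) by (apply lt_IZR; lra).
  assert (Hk : INR k = - IZR f) by (unfold k; rewrite INR_IZR_INZ, Z2Nat.id by lia; apply opp_IZR).
  assert (Hkq : Q2R (qnat k) = INR k) by apply Q2R_qnat.
  assert (Hk0 : 0 < INR k) by (rewrite Hk; apply IZR_lt in Hf1; lra).
  assert (Hz : Q2R (q / qnat k) = Q2R q / INR k) by (rewrite Q2R_div, Hkq; auto; apply Q2R_nz; lra).
  assert (Hz1 : -1 <= Q2R q / INR k <= 0).
  { split. apply (Rmult_le_reg_r (INR k)); auto. unfold Rdiv. rewrite Rmult_assoc, Rinv_l by lra. lra.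
    unfold Rdiv. assert (0 < / INR k) by (apply Rinv_0_lt_compat; lra). nra. }
  assert (He : exp (Q2R q) = exp (Q2R q / INR k) ^ k).
  { rewrite <- exp_nat. f_equal. field. lra. }
  rewrite !Q2R_qpow, LBe, UBe, Hz, He.
  pose proof (rE_pos n _ Hz1). pose proof (exp_lo n _ (proj2 Hz1)). pose proof (exp_hi n _ (proj2 Hz1)).
  pose proof (exp_pos (Q2R q / INR k)).
  split. apply pow_lt; lra. split; apply pow_incr; lra.
Qed.

Lemma exp_LB q n : 0 < Q2R (LB_exp q n) /\ Q2R (LB_exp q n) <= exp (Q2R q).
Proof.
  unfold LB_exp. destruct (Qle_bool q 0) eqn:E.
  - apply Qle_b_true, Qle_Rle in E. rewrite Q2R_0 in E. pose proof (exp_np q n E). tauto.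
  - apply Qle_b_false in E. rewrite Q2R_0 in E.
    assert (H0 : Q2R (- q) <= 0) by (rewrite Q2R_opp; lra).
    destruct (exp_np (-q) n H0) as [_ [_ H]]. rewrite Q2R_opp in H.
    pose proof (exp_pos (- Q2R q)).
    rewrite Q2R_inv by (apply Q2R_nz; lra).
    split. apply Rinv_0_lt_compat; lra.
    replace (exp (Q2R q)) with (/ exp (- Q2R q)) by (rewrite exp_Ropp, Rinv_inv; auto).
    apply Rinv_le_contravar; lra.
Qed.

Lemma exp_UB q n : exp (Q2R q) <= Q2R (UB_exp q n).
Proof.
  unfold UB_exp. destruct (Qle_bool q 0) eqn:E.
  - apply Qle_b_true, Qle_Rle in E. rewrite Q2R_0 in E. pose proof (exp_np q n E). tauto.
  - apply Qle_b_false in E. rewrite Q2R_0 in E.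
    assert (H0 : Q2R (- q) <= 0) by (rewrite Q2R_opp; lra).
    destruct (exp_np (-q) n H0) as [P [H _]]. rewrite Q2R_opp in H.
    rewrite Q2R_inv by (apply Q2R_nz; lra).
    replace (exp (Q2R q)) with (/ exp (- Q2R q)) by (rewrite exp_Ropp, Rinv_inv; auto).
    apply Rinv_le_contravar; lra.
Qed.

Lemma ln12 q n : 1 <= Q2R q -> Q2R (LB_ln12 q n) <= ln (Q2R q) <= Q2R (UB_ln12 q n).
Proof.
  intros Hq. unfold LB_ln12, UB_ln12. rewrite !Q2R_ln_series.
  pose proof (ln_lo n (Q2R q - 1) ltac:(lra)). pose proof (ln_hi n (Q2R q - 1) ltac:(lra)).
  replace (1 + (Q2R q - 1)) with (Q2R q) in * by ring. lra.
Qed.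

Lemma ln_ge1 q n : 1 <= Q2R q -> Q2R (LB_ln_ge1 q n) <= ln (Q2R q) <= Q2R (UB_ln_ge1 q n).
Proof.
  intros Hq. unfold LB_ln_ge1, UB_ln_ge1.
  destruct (Qle_bool q 2) eqn:E. apply ln12; auto.
  apply Qle_b_false in E. rewrite Q2R_2 in E.
  set (f := Qfloor q). set (m := ln_exp2 q).
  assert (Hf : Q2R q < IZR f + 1) by (rewrite <- plus_IZR, <- Q2R_injZ; apply Qlt_Rlt, Qlt_floor).
  assert (Hf0 : (0 < f)%Z) by (apply lt_IZR; lra).
  assert (Hfq : IZR f <= Q2R q) by (rewrite <- Q2R_injZ; apply Qle_Rle, Qfloor_le).
  assert (Hm : Z.of_nat m = Z.log2 f) by (unfold m, ln_exp2; fold f; apply Z2Nat.id, Z.log2_nonneg).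
  assert (H2m : 2 ^ m <= Q2R q).
  { rewrite pow_IZR, Hm. apply Rle_trans with (IZR f); auto. apply IZR_le. apply Z.log2_spec; auto. }
  assert (H2p : 0 < 2 ^ m) by (apply pow_lt; lra).
  assert (Hq2 : Q2R (qpow 2 m) = 2 ^ m) by (rewrite Q2R_qpow, Q2R_2; auto).
  assert (Hmant : Q2R (ln_mant q) = Q2R q / 2 ^ m).
  { unfold ln_mant. fold m. rewrite Q2R_div, Hq2; auto. apply Q2R_nz; lra. }
  assert (Hmant1 : 1 <= Q2R (ln_mant q)).
  { rewrite Hmant. apply (Rmult_le_reg_r (2^m)); auto. unfold Rdiv. rewrite Rmult_assoc, Rinv_l by lra. lra. }
  assert (Hln : ln (Q2R q) = INR m * ln 2 + ln (Q2R (ln_mant q))).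
  { rewrite Hmant, <- ln_pow by lra. rewrite <- ln_mult by (try apply Rdiv_lt_0_compat; lra). f_equal. field. lra. }
  pose proof (ln12 2 n ltac:(rewrite Q2R_2; lra)). rewrite Q2R_2 in H.
  pose proof (ln12 _ n Hmant1). pose proof (pos_INR m).
  rewrite !Q2R_plus, !Q2R_mult, !Q2R_qnat. fold m. rewrite Hln.
  split; apply Rplus_le_compat; try tauto; apply Rmult_le_compat_l; tauto.
Qed.

Lemma ln_LB_UB q n : 0 < Q2R q -> Q2R (LB_ln q n) <= ln (Q2R q) <= Q2R (UB_ln q n).
Proof.
  intros Hq. unfold LB_ln, UB_ln.
  destruct (Qle_bool 1 q) eqn:E.
  - apply Qle_b_true, Qle_Rle in E. rewrite Q2R_1 in E. apply ln_ge1; auto.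
  - apply Qle_b_false in E. rewrite Q2R_1 in E.
    assert (Hi : Q2R (/ q) = / Q2R q) by (apply Q2R_inv, Q2R_nz; lra).
    assert (H1 : 1 <= Q2R (/ q)).
    { rewrite Hi. apply (Rmult_le_reg_r (Q2R q)); auto. rewrite Rinv_l by lra. lra. }
    pose proof (ln_ge1 _ n H1). rewrite Hi, ln_Rinv in H by lra.
    rewrite !Q2R_opp. lra.
Qed.
Lemma atan_le a b : a <= b -> atan a <= atan b.
Proof. intros H. destruct (Req_dec a b). subst; lra. apply Rlt_le, atan_increasing. lra. Qed.
Lemma exp_le a b : a <= b -> exp a <= exp b.
Proof. intros H. destruct (Req_dec a b). subst; lra. apply Rlt_le, exp_increasing. lra. Qed.
Lemma ln_le' a b : 0 < a -> a <= b -> ln a <= ln b.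
Proof. intros H0 H. destruct (Req_dec a b). subst; lra. apply Rlt_le, ln_increasing; lra. Qed.

Theorem proposition12 (n : nat) (X : interval) (x : R) :
  in_interval x X ->
  in_interval (atan x) (I_atan X n) /\
  in_interval (exp x) (I_exp X n) /\
  ((0 <= fst X)%Q -> in_interval (sqrt x) (I_sqrt X n)) /\
  ((0 < fst X)%Q -> in_interval (ln x) (I_ln X n)) /\
  in_interval PI (I_pi n).
Proof.
  destruct X as [lo hi]. unfold in_interval, I_atan, I_exp, I_sqrt, I_ln, I_pi; simpl.
  intros [Hl Hh]. split; [|split; [|split; [|split]]].
  - pose proof (atan_LB lo n). pose proof (atan_UB hi n).
    pose proof (atan_le _ _ Hl). pose proof (atan_le _ _ Hh). lra.
  - pose proof (exp_LB lo n). pose proof (exp_UB hi n).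
    pose proof (exp_le _ _ Hl). pose proof (exp_le _ _ Hh). lra.
  - intros H0. apply Qle_Rle in H0. rewrite Q2R_0 in H0.
    pose proof (sqrt_lb lo n H0). pose proof (sqrt_ub hi n ltac:(lra)).
    pose proof (sqrt_le_1_alt _ _ Hl). pose proof (sqrt_le_1_alt _ _ Hh). lra.
  - intros H0. apply Qlt_Rlt in H0. rewrite Q2R_0 in H0.
    pose proof (ln_LB_UB lo n H0). pose proof (ln_LB_UB hi n ltac:(lra)).
    pose proof (ln_le' _ _ H0 Hl). pose proof (ln_le' x _ ltac:(lra) Hh). lra.
  - apply pi_bounds.
Qed.
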